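(* Let $m\ge1$, $n\ge0$, $d=m-n$, and let $\lambda$ be a partition with $\lambda_1+d-1\ge0$. Put $\hat x=(x_2,\dots,x_m)$ and $\hat\lambda=(\lambda_2,\lambda_3,\dots)$. Then $$\Big\{SP_\lambda(x,y)\,x^{\rho_m}y^{\rho_n}\Big\}=\Big\{\prod_{j=1}^n(x_1-y_j)\,x_1^{\lambda_1+d-1}\,SP_{\hat\lambda}(\hat x,y)\,x_2^{m-2}x_3^{m-3}\cdots x_m^{0}\,y^{\rho_n}\Big\}.$$
   Context: For a function $f(x,y)$ of $x=(x_1,\dots,x_m)$ and $y=(y_1,\dots,y_n)$, define $\{f\}=\sum_{w\in S_m\times S_n}\varepsilon(w)\,w(f)$. Here $S_m$ permutes the $x_i$, $S_n$ permutes the $y_j$, and $\varepsilon$ is the sign character. Set $x^{\rho_m}=x_1^{m-1}x_2^{m-2}\cdots x_m^0$ and $y^{\rho_n}=y_1^{n-1}\cdots y_n^0$. For a partition $\mu$ and any finite lists of variables $x,y$, the super Schur polynomial is defined by the Jacobi–Trudy formula $SP_\mu(x,y)=\det(h_{\mu_r-r+s}(x,y))_{r,s=1}^{l(\mu)}$, with $SP_\emptyset=1$. The $h_a(x,y)$ are given by $\prod_j(1-ty_j)/\prod_i(1-tx_i)=\sum_{a\ge0}h_a(x,y)t^a$, and $h_a=0$ for $a<0$. Here $l(\mu)$ is the number of nonzero parts of $\mu$. *)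

(* Defs.v *)
From HB Require Import structures.
From mathcomp Require Import all_boot all_order all_algebra all_fingroup.
Set Implicit Arguments. Unset Strict Implicit. Unset Printing Implicit Defensive.
Import Order.TTheory GRing.Theory Num.Theory.
Local Open Scope ring_scope.

(* h_a(x,y) = coefficient of t^a in prod_j (1 - t y_j) / prod_i (1 - t x_i).
   The geometric series 1/(1 - t x_i) is truncated at degree a, which does not
   affect the coefficient of t^a. *)
Definition hsuper (R : comRingType) (xs ys : seq R) (a : nat) : R :=
  ((\prod_(yj <- ys) (1 - yj *: 'X)) *
   \prod_(xi <- xs) \sum_(k < a.+1) (xi *: 'X) ^+ k)`_a.

Definition hsuperZ (R : comRingType) (xs ys : seq R) (a : int) : R :=
  match a with
  | Posz k => hsuper xs ys k
  | Negz _ => 0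
  end.

Definition plen (mu : seq nat) : nat := count (fun p => p != 0%N) mu.

(* super Schur polynomial via Jacobi-Trudy; 0-based indices r,s
   (mu_r - r + s is unchanged by the shift). det of 0x0 matrix = 1. *)
Definition SP (R : comRingType) (xs ys : seq R) (mu : seq nat) : R :=
  \det (\matrix_(r < plen mu, s < plen mu)
          hsuperZ xs ys ((nth 0%N mu r)%:Z - (r : nat)%:Z + (s : nat)%:Z)).

Definition is_partition (mu : seq nat) : bool := sorted geq mu.

Definition antisym (R : comRingType) (m n : nat)
    (f : ('I_m -> R) -> ('I_n -> R) -> R) (x : 'I_m -> R) (y : 'I_n -> R) : R :=
  \sum_(s : 'S_m) \sum_(t : 'S_n)
     ((-1) ^+ odd_perm s * (-1) ^+ odd_perm t) * f (x \o s) (y \o t).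

Definition xrho (R : comRingType) (m : nat) (x : 'I_m -> R) : R :=
  \prod_(i < m) x i ^+ (m - 1 - i)%N.

(* Main.v *)
Require Import Defs.
From HB Require Import structures.
From mathcomp Require Import all_boot all_order all_algebra all_fingroup.
Import GRing.Theory.
Local Open Scope ring_scope.

Section Poly.
Variable R : comRingType.

Definition Gs (N : nat) (c : R) : {poly R} := \sum_(k < N) (c *: 'X) ^+ k.

Lemma coefG N c i : (Gs N c)`_i = if (i < N)%N then c ^+ i else 0.
Proof.
rewrite /Gs coef_sum.
under eq_bigr => k _ do rewrite exprZn coefZ coefXn.
case: ltnP => H.
  rewrite (bigD1 (Ordinal H)) //= eqxx mulr1 big1 ?addr0 // => k.
  by rewrite -val_eqE /= eq_sym => /negbTE ->; rewrite mulr0.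
by rewrite big1 // => k _; rewrite gtn_eqF ?mulr0 // (leq_trans (ltn_ord k) H).
Qed.

Definition eqlow N (p q : {poly R}) := forall i, (i < N)%N -> p`_i = q`_i.

Lemma eqlowM N p1 p2 q1 q2 : eqlow N p1 q1 -> eqlow N p2 q2 -> eqlow N (p1 * p2) (q1 * q2).
Proof.
move=> h1 h2 i Hi; rewrite !coefM; apply: eq_bigr => j _.
have Hj : (j < N)%N := leq_ltn_trans (ltn_ord j : (j <= i)%N) Hi.
by rewrite h1 // h2 // (leq_ltn_trans (leq_subr j i) Hi).
Qed.

Lemma eqlow_prod (I : Type) (r : seq I) (P : pred I) (F1 F2 : I -> {poly R}) N :
  (forall i, P i -> eqlow N (F1 i) (F2 i)) ->
  eqlow N (\prod_(i <- r | P i) F1 i) (\prod_(i <- r | P i) F2 i).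
Proof.
move=> h; elim: r => [|a r IH]; first by rewrite !big_nil.
rewrite !big_cons; case: ifP => Pa //; exact: eqlowM (h a Pa) IH.
Qed.

Lemma hsuper_trunc xs ys a N : (a < N)%N ->
  hsuper xs ys a = ((\prod_(yj <- ys) (1 - yj *: 'X)) * \prod_(xi <- xs) Gs N xi)`_a.
Proof.
move=> H; rewrite /hsuper.
apply: (@eqlowM a.+1) => //.
apply: eqlow_prod => xi _ i Hi.
rewrite -/(Gs _ _) !coefG Hi (leq_trans Hi H) //.
Qed.

Lemma coef_lowerX (p : {poly R}) c i :
  ((1 - c *: 'X) * p)`_i = p`_i - c * (if i is i'.+1 then p`_i' else 0).
Proof.
by rewrite mulrBl mul1r coefB -scalerAl coefZ coefXM; case: i.
Qed.

Lemma coefYG (w : R) N : forall ys b, (size ys <= b)%N -> (b < N)%N ->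
  ((\prod_(yj <- ys) (1 - yj *: 'X)) * Gs N w)`_b
    = w ^+ (b - size ys) * \prod_(yj <- ys) (w - yj).
Proof.
elim=> [|y ys IH] b Hs Hb.
  by rewrite !big_nil mul1r coefG Hb subn0 mulr1.
rewrite !big_cons -mulrA coef_lowerX /=.
case: b Hs Hb => [//|b] /= Hs Hb.
rewrite (IH b.+1) ?(ltnW Hs) // (IH b) ?(ltnW Hb) //.
have -> : (b.+1 - (size ys).+1 = b - size ys)%N by [].
rewrite subSn //.
by rewrite exprS -mulrA -mulrBl mulrCA.
Qed.

Lemma eqlow_geom N c : eqlow N ((1 - c *: 'X) * Gs N c) 1.
Proof.
have ->: (1 - c *: 'X) * Gs N c = 1 - (c *: 'X) ^+ N.
  have := subrXX (1 : {poly R}) (c *: 'X) N; rewrite expr1n => ->; rewrite /Gs; congr (_ * _).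
  by apply: eq_bigr => i _; rewrite expr1n mul1r.
move=> i Hi; rewrite coefB exprZn coefZ coefXn ltn_eqF // mulr0 subr0 //.
Qed.

Lemma hsuper_cons (w : R) ws ys b :
  hsuper ws ys b = hsuper (w :: ws) ys b - w * (if b is b'.+1 then hsuper (w :: ws) ys b' else 0).
Proof.
set P := (\prod_(yj <- ys) (1 - yj *: 'X)) * \prod_(xi <- ws) Gs b.+1 xi.
have E1 : forall a, (a < b.+1)%N -> hsuper (w :: ws) ys a = (Gs b.+1 w * P)`_a.
  move=> a Ha; rewrite (hsuper_trunc _ _ _ _ Ha) big_cons /P.
  by rewrite mulrCA.
have -> : (hsuper (w :: ws) ys b - w * (if b is b'.+1 then hsuper (w :: ws) ys b' else 0))
   = ((1 - w *: 'X) * (Gs b.+1 w * P))`_b.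
  rewrite coef_lowerX E1 //; congr (_ - _ * _).
  have [Eb|[b' Eb]] : b = 0%N \/ exists b', b = b'.+1 by case: (b) => [|b']; [left|right; exists b'].
    by rewrite Eb.
  rewrite Eb E1; [by rewrite Eb| by rewrite Eb ltnS leqnSn].
have := @eqlowM b.+1 _ P 1 P (eqlow_geom _ _) (fun _ _ => erefl) b (ltnSn b).
rewrite mul1r mulrA => ->.
by rewrite (hsuper_trunc _ _ _ _ (ltnSn b)).
Qed.

End Poly.
Arguments Gs {R}.
Arguments eqlow {R}.

Section Sym.
Variable R : comRingType.

Lemma hsuperZ_nat (xs ys : seq R) (a b : nat) :
  hsuperZ xs ys (a%:Z - b%:Z) = if (b <= a)%N then hsuper xs ys (a - b) else 0.
Proof.
case: leqP => H.
  rewrite (subzn H). reflexivity.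
have -> : a%:Z - b%:Z = Negz (b - a).-1.
  rewrite NegzE prednK; last by rewrite subn_gt0.
  rewrite -(subzn (ltnW H)). by rewrite opprB.
reflexivity.
Qed.

Lemma hsuper_perm (xs1 xs2 ys1 ys2 : seq R) a :
  perm_eq xs1 xs2 -> perm_eq ys1 ys2 -> hsuper xs1 ys1 a = hsuper xs2 ys2 a.
Proof. by move=> H1 H2; rewrite /hsuper (perm_big _ H1) (perm_big _ H2). Qed.

Lemma hsuperZ_perm (xs1 xs2 ys1 ys2 : seq R) a :
  perm_eq xs1 xs2 -> perm_eq ys1 ys2 -> hsuperZ xs1 ys1 a = hsuperZ xs2 ys2 a.
Proof. by move=> H1 H2; case: a => //= k; apply: hsuper_perm. Qed.

Lemma SP_perm (xs1 xs2 ys1 ys2 : seq R) mu :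
  perm_eq xs1 xs2 -> perm_eq ys1 ys2 -> SP xs1 ys1 mu = SP xs2 ys2 mu.
Proof.
move=> H1 H2; rewrite /SP; congr (\det _); apply/matrixP => i j; rewrite !mxE.
exact: hsuperZ_perm.
Qed.

Lemma perm_map_enum k (f : 'I_k -> R) (s : 'S_k) :
  perm_eq [seq (f \o s) i | i <- enum 'I_k] [seq f i | i <- enum 'I_k].
Proof.
rewrite (map_comp f s); apply: perm_map.
apply: uniq_perm; first by rewrite map_inj_uniq ?enum_uniq //; exact: perm_inj.
  exact: enum_uniq.
move=> i; rewrite mem_enum; apply/mapP; exists (s^-1 i)%g; first by rewrite mem_enum.
by rewrite permKV.
Qed.

End Sym.


Section Mx.
Variable R : comRingType.
Variable m : nat.
Variable x : 'I_m.+1 -> R.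

Lemma sum_widen (F : nat -> R) n1 n2 : (n1 <= n2)%N ->
  (forall k, (n1 <= k)%N -> (k < n2)%N -> F k = 0) ->
  \sum_(k < n1) F k = \sum_(k < n2) F k.
Proof.
move=> H Hz; rewrite (big_ord_widen _ _ H) big_mkcond; apply: eq_bigr => k _.
by case: ifP => // /negbT; rewrite -leqNgt => h; rewrite Hz.
Qed.

Lemma prod_map_enum (F : R -> {poly R}) :
  \prod_(xi <- [seq x i | i <- enum 'I_m.+1]) F xi = \prod_i F (x i).
Proof. by rewrite big_map big_enum. Qed.

Lemma sizeQ j : (size (\prod_(i | i != j) (1 - x i *: 'X))%R <= m.+1)%N.
Proof.
apply: leq_trans (size_poly_prod_leq _ _) _.
have H2 : forall i : 'I_m.+1, (size (1 - x i *: 'X)%R <= 2)%N.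
  move=> i; apply: leq_trans (size_polyD _ _) _; rewrite geq_max size_poly1 /=.
  by rewrite size_polyN (leq_trans (size_scale_leq _ _)) // size_polyX.
apply: leq_trans (_ : ((\sum_(i | i != j) 2%N).+1 - #|[pred i | i != j]|)%N <= _)%N.
  by rewrite leq_sub2r // ltnS leq_sum.
rewrite sum_nat_const.
have -> : #|[pred i | i != j]| = m.
  transitivity #|predC1 j|; first exact: eq_card.
  by rewrite cardC1 card_ord.
by rewrite muln2 -addnn -addSn addnK.
Qed.


Definition xsl := [seq x i | i <- enum 'I_m.+1].

Lemma L1 j (zs : seq R) c : (size zs <= c)%N ->
 \sum_(k < m.+1) (\prod_(i | i != j) (1 - x i *: 'X))`_k * hsuperZ xsl zs (c%:Z - k%:Z)
 = x j ^+ (c - size zs) * \prod_(z <- zs) (x j - z).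
Proof.
move=> Hc.
set Q := \prod_(i | i != j) _.
set P := (\prod_(yj <- zs) (1 - yj *: 'X)) * \prod_(xi <- xsl) Gs c.+1 xi.
have E : forall k : nat, hsuperZ xsl zs (c%:Z - k%:Z) = if (k <= c)%N then P`_(c - k) else 0.
  move=> k; rewrite hsuperZ_nat; case: ifP => // Hk; apply: hsuper_trunc; by rewrite ltnS leq_subr.
rewrite (eq_bigr (fun k : 'I_m.+1 => Q`_k * (if (k <= c)%N then P`_(c - k) else 0))); last first.
  by move=> k _; rewrite E.
rewrite (@sum_widen (fun k => Q`_k * (if (k <= c)%N then P`_(c - k) else 0)) m.+1 (m.+1 + c.+1)) ?leq_addr //; last first.
  move=> k Hk _; rewrite nth_default ?mul0r //; exact: leq_trans (sizeQ j) Hk.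
rewrite -(@sum_widen (fun k => Q`_k * (if (k <= c)%N then P`_(c - k) else 0)) c.+1) ?leq_addl //; last first.
  by move=> k Hk _; rewrite leqNgt Hk mulr0.
transitivity ((Q * P)`_c).
  rewrite coefM; apply: eq_bigr => k _; have := ltn_ord k; rewrite ltnS => -> //.
have -> : Q * P = (\prod_(yj <- zs) (1 - yj *: 'X)) * Gs c.+1 (x j) *
      \prod_(i | i != j) ((1 - x i *: 'X) * Gs c.+1 (x i)).
  rewrite /P prod_map_enum (bigD1 j) //= big_split /=.
  by rewrite mulrCA (mulrCA Q) mulrA.
have H : eqlow c.+1 (\prod_(i | i != j) ((1 - x i *: 'X) * Gs c.+1 (x i))) 1.
  have := @eqlow_prod R _ (index_enum 'I_m.+1) (fun i => i != j)
     (fun i => (1 - x i *: 'X) * Gs c.+1 (x i)) (fun _ => 1) c.+1 (fun i _ => @eqlow_geom R _ _).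
  by rewrite big1_eq.
rewrite (@eqlowM R c.+1 _ _ _ 1 (fun _ _ => erefl) H c (ltnSn c)) mulr1.
exact: coefYG.
Qed.

Definition Amx (f : R -> R) : 'M[R]_m.+1 :=
  \matrix_(j, l) if l == ord0 then f (x j) else x j ^+ (m - l).

Lemma antisym_col0 (f : R -> R) :
  \sum_(s : 'S_m.+1) (-1) ^+ s * (f (x (s ord0)) * xrho (fun i : 'I_m => x (s (lift ord0 i))))
  = \det (Amx f).
Proof.
rewrite -det_tr /determinant; apply: eq_bigr => s _; congr (_ * _).
rewrite big_ord_recl !mxE eqxx; congr (_ * _); rewrite /xrho.
apply: eq_bigr => i _; rewrite !mxE /=.
by rewrite /bump /= add1n -subnDA add1n.
Qed.

Lemma antisym_V :
  \sum_(s : 'S_m.+1) (-1) ^+ s * xrho (x \o s) = \det (Amx (fun z => z ^+ m)).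
Proof.
rewrite -det_tr /determinant; apply: eq_bigr => s _; congr (_ * _).
rewrite /xrho; apply: eq_bigr => i _; rewrite !mxE /= subn1 /=.
by case: eqP => [->|]; rewrite ?subn0.
Qed.


Definition Hmx (g : 'I_m.+1 -> R) : 'M[R]_m.+1 :=
  \matrix_(k, l) if l == ord0 then g k else hsuperZ xsl [::] ((m - l)%N%:Z - k%:Z).

Lemma cof_indep g1 g2 i : cofactor (Hmx g1) i ord0 = cofactor (Hmx g2) i ord0.
Proof.
rewrite !expand_cofactor; apply: eq_bigr => s /eqP Hs; congr (_ * _).
apply: eq_bigr => k Hk; rewrite !mxE.
have : s k != ord0 by rewrite -Hs (inj_eq perm_inj) eq_sym.
by move/negbTE ->.
Qed.

Lemma detH g : \det (Hmx g) = g ord_max * cofactor (Hmx g) ord_max ord0.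
Proof.
rewrite (expand_det_col _ ord0) (bigD1 ord_max) //= big1 ?addr0; first by rewrite mxE eqxx.
move=> i Hi; rewrite expand_cofactor big1 ?mulr0 // => s /eqP Hs.
rewrite (bigD1 ord_max) ?Hi //=.
have Hn : s ord_max != ord0 by rewrite -Hs (inj_eq perm_inj) eq_sym.
rewrite mxE (negbTE Hn) hsuperZ_nat /=.
have Hl : (0 < s ord_max)%N.
  rewrite lt0n; apply: contraNneq Hn => E; exact/eqP/val_inj.
have Hm : (0 < m)%N := leq_trans Hl (ltn_ord (s ord_max)).
by rewrite leqNgt ltn_subrL Hl Hm /= mul0r mulr0.
Qed.

Lemma hsuper0 (xs : seq R) : hsuper xs [::] 0 = 1.
Proof.
rewrite /hsuper big_nil mul1r coef0_prod big1 // => xi _.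
by rewrite big_ord1 expr0 coef1.
Qed.

Lemma DK (ys : seq R) b (f : R -> R) : (size ys <= b)%N -> (m <= b)%N ->
  (forall z, f z = z ^+ (b - size ys) * \prod_(yj <- ys) (z - yj)) ->
  \det (Amx f) = hsuper xsl ys (b - m) * \det (Amx (fun z => z ^+ m)).
Proof.
move=> Hs Hm Hf.
set E := \matrix_(j, k) (\prod_(i | i != j) (1 - x i *: 'X))`_k : 'M[R]_m.+1.
have Ecol : forall g : 'I_m.+1 -> R, forall j l, (E *m Hmx g) j l =
   \sum_(k < m.+1) (\prod_(i | i != j) (1 - x i *: 'X))`_k *
     (if l == ord0 then g k else hsuperZ xsl [::] ((m - l)%N%:Z - k%:Z)).
  by move=> g j l; rewrite mxE; apply: eq_bigr => k _; rewrite !mxE.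
have Eoth : forall g : 'I_m.+1 -> R, forall j l, l != ord0 ->
   (E *m Hmx g) j l = x j ^+ (m - l).
  move=> g j l Hl; rewrite Ecol (negbTE Hl).
  by rewrite (L1 j [::]) // subn0 big_nil mulr1.
have E1 : Amx f = E *m Hmx (fun k => hsuperZ xsl ys (b%:Z - k%:Z)).
  apply/matrixP => j l; rewrite [LHS]mxE; case: eqP => Hl.
    by rewrite Ecol Hl eqxx L1 // Hf.
  by rewrite Eoth //; apply/eqP.
have E2 : Amx (fun z => z ^+ m) = E *m Hmx (fun k => hsuperZ xsl [::] (m%:Z - k%:Z)).
  apply/matrixP => j l; rewrite [LHS]mxE; case: eqP => Hl.
    by rewrite Ecol Hl eqxx L1 // subn0 big_nil mulr1.
  by rewrite Eoth //; apply/eqP.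
rewrite E1 E2 !det_mulmx !detH (cof_indep _ (fun k => hsuperZ xsl [::] (m%:Z - k%:Z))) /=.
rewrite !hsuperZ_nat Hm leqnn subnn hsuper0 mul1r.
by rewrite mulrCA.
Qed.
End Mx.


Section Exp.
Variable R : comRingType.

Definition Jm (xs ys : seq R) (lam : seq nat) L : 'M[R]_L :=
  \matrix_(r < L, s < L) hsuperZ xs ys ((nth 0%N lam r)%:Z - (r : nat)%:Z + (s : nat)%:Z).

Lemma idxE (N r s : nat) : N%:Z - r%:Z + s%:Z = (N + s)%N%:Z - r%:Z.
Proof. by rewrite PoszD addrAC. Qed.

Lemma Usum (w : R) L (F : nat -> R) (s : 'I_L.+1) :
  \sum_(k < L.+1) F k * (((k : nat) == s)%:R - w * ((k.+1 == s)%:R))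
  = F s - (if (s : nat) is s'.+1 then w * F s' else 0).
Proof.
under eq_bigr => k _ do rewrite mulrBr.
rewrite sumrB; congr (_ - _).
  rewrite (bigD1 s) //= eqxx /= mulr1 big1 ?addr0 //.
  move=> k Hk; rewrite (_ : (k : nat) == s = false) ?mulr0 //; exact/negbTE.
case: s => [[|s'] Hs] /=.
  by rewrite big1 // => k _; rewrite /= mulr0n !mulr0.
rewrite (bigD1 (Ordinal (ltnW Hs))) //= eqxx /= mulr1 big1 ?addr0; first by rewrite mulrC.
move=> k Hk; rewrite (_ : k.+1 == s'.+1 = false) ?mulr0 ?mul0r //.
by rewrite eqSS; apply/negbTE.
Qed.

Lemma SP_expand (w : R) (ws ys : seq R) (a : nat) (t : seq nat) L :
  plen t = L ->
  SP ws ys t = \sum_(k < L.+1) w ^+ k * cofactor (Jm (w :: ws) ys (a :: t) L.+1) ord0 k.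
Proof.
move=> HL.
set J := Jm (w :: ws) ys (a :: t) L.+1.
set Jt := \matrix_(r, s) (if r == ord0 then w ^+ s else J r s) : 'M[R]_L.+1.
set U := \matrix_(k, s) (((k : nat) == s)%:R - w * ((k.+1 == s)%:R)) : 'M[R]_L.+1.
have dU : \det U = 1.
  rewrite -det_tr det_trig; last first.
    apply/forallP => i; apply/forallP => j; apply/implyP => Hij.
    rewrite !mxE (gtn_eqF Hij) (gtn_eqF (ltnW Hij : (i < j.+1)%N)) mulr0 subr0 //.
  by apply: big1 => i _; rewrite !mxE eqxx (gtn_eqF (ltnSn i)) mulr0 subr0.
have cofE : forall k, cofactor Jt ord0 k = cofactor J ord0 k.
  move=> k; rewrite !expand_cofactor; apply: eq_bigr => s _; congr (_ * _).
  apply: eq_bigr => i Hi; rewrite mxE; case: eqP => // Ei.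
  by rewrite -Ei eqxx in Hi.
have -> : \sum_(k < L.+1) w ^+ k * cofactor J ord0 k = \det Jt.
  rewrite (expand_det_row _ ord0); apply: eq_bigr => k _.
  by rewrite cofE mxE eqxx.
rewrite -[\det Jt]mulr1 -dU -det_mulmx (expand_det_row _ ord0).
rewrite (bigD1 ord0) //= big1 ?addr0; last first.
  move=> k Hk; rewrite mxE.
  rewrite (eq_bigr (fun j : 'I_L.+1 => (fun n => w ^+ n) j * U j k)); last first.
    by move=> j _; rewrite !mxE.
  under eq_bigr => j _ do rewrite mxE.
  rewrite Usum; case: k Hk => [[|k'] Hk] Hk0 /=.
    by exfalso; move: Hk0; rewrite -val_eqE.
  by rewrite exprS subrr mul0r.
have E00 : (Jt *m U) ord0 ord0 = 1.
  rewrite mxE (eq_bigr (fun j : 'I_L.+1 => (fun n => w ^+ n) j * U j ord0)); last first.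
    by move=> j _; rewrite !mxE.
  under eq_bigr => j _ do rewrite mxE.
  by rewrite Usum /= expr0 subr0.
rewrite E00 mul1r /cofactor /= expr0 mul1r.
subst L; rewrite /SP; congr (\det _); apply/matrixP => r s.
rewrite !mxE.
rewrite (eq_bigr (fun j : 'I_(plen t).+1 =>
   (fun n : nat => hsuperZ (w :: ws) ys ((nth 0%N t r)%:Z - (r.+1)%:Z + n%:Z)) j *
     (((j : nat) == lift ord0 s)%:R - w * ((j.+1 == lift ord0 s)%:R)))); last first.
  by move=> j _; rewrite !mxE /= /bump add0n add1n.
rewrite (@Usum w _ (fun n : nat => hsuperZ (w :: ws) ys ((nth 0%N t r)%:Z - (r.+1)%:Z + n%:Z))) lift0 /=.
rewrite !idxE !hsuperZ_nat addnS subSS ltnS.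
case: (leqP r (nth 0%N t r + s)) => H.
  rewrite (hsuper_cons _ w); congr (_ - _ * _).
  case E: (nth 0%N t r + s - r)%N => [|b'].
    by move: E => /eqP; rewrite subn_eq0 leqNgt => /negbTE ->.
  have -> : (r < nth 0%N t r + s)%N by rewrite -subn_gt0 E.
  by rewrite subnS E.
rewrite (_ : (r < nth 0%N t r + s)%N = false); last by apply/negbTE; rewrite -leqNgt ltnW.
by rewrite mulr0 subr0.
Qed.

End Exp.



Lemma sh1 (R : comRingType) (a b S X Y : R) : (a * b) * (S * X * Y) = S * (a * X) * (b * Y).
Proof. by rewrite [S * (a * X)]mulrCA mulrACA. Qed.

Lemma sh2 (R : comRingType) (a b p q S X Y : R) :
  (a * b) * (p * q * S * X * Y) = (a * (p * q * S * X)) * (b * Y).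
Proof. by rewrite [RHS]mulrACA. Qed.

Lemma hsuper0g (R : comRingType) (xs ys : seq R) : hsuper xs ys 0 = 1.
Proof.
rewrite /hsuper coef0M !coef0_prod !big1 ?mulr1 // => i _.
  by rewrite big_ord1 expr0 coef1.
by rewrite coefB coef1 coefZ coefX mulr0 subr0.
Qed.

Lemma SP_nil (R : comRingType) (xs ys : seq R) mu : plen mu = 0%N -> SP xs ys mu = 1.
Proof.
move=> Hp; rewrite /SP.
move: (\matrix_(r < plen mu, s < plen mu) _); rewrite Hp => M.
exact: det_mx00.
Qed.

Lemma plen_zero (t : seq nat) : path geq 0%N t -> plen t = 0%N.
Proof.
elim: t => [//|b t IH] /= /andP [Hb Ht].
have Eb : b = 0%N by apply/eqP; rewrite -leqn0.
by rewrite Eb /= IH // -Eb.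
Qed.

Lemma Jm_perm (R : comRingType) (xs1 xs2 ys : seq R) lam L :
  perm_eq xs1 xs2 -> Jm R xs1 ys lam L = Jm R xs2 ys lam L.
Proof.
move=> H; apply/matrixP => i j; rewrite !mxE; exact: hsuperZ_perm.
Qed.

Lemma cons_perm (R : comRingType) m (x : 'I_m.+1 -> R) (s : 'S_m.+1) :
  perm_eq (x (s ord0) :: [seq x (s (lift ord0 i)) | i <- enum 'I_m])
          [seq x i | i <- enum 'I_m.+1].
Proof.
have -> : x (s ord0) :: [seq x (s (lift ord0 i)) | i <- enum 'I_m]
   = [seq (x \o s) i | i <- enum 'I_m.+1].
  by rewrite enum_ordSl /= -map_comp.
exact: perm_map_enum.
Qed.

Lemma sum_fact (R : comRingType) (I J : finType) (S : R) (F : I -> R) (G : J -> R) :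
  \sum_i \sum_j S * F i * G j = S * (\sum_i F i) * (\sum_j G j).
Proof.
transitivity (\sum_i S * F i * \sum_j G j).
  by apply: eq_bigr => i _; rewrite mulr_sumr.
by rewrite -mulr_suml -mulr_sumr.
Qed.

Lemma sum_fact2 (R : comRingType) (I J : finType) (F : I -> R) (G : J -> R) :
  \sum_i \sum_j F i * G j = (\sum_i F i) * (\sum_j G j).
Proof.
rewrite -[\sum_i F i]mul1r -sum_fact; apply: eq_bigr => i _.
by apply: eq_bigr => j _; rewrite mul1r.
Qed.

Lemma sh3 (R : comRingType) (a c P E K X : R) :
  c * (a * ((E * K * P) * X)) = a * ((P * E) * (K * c) * X).
Proof.
rewrite mulrCA; congr (_ * _).
rewrite [LHS]mulrC mulrAC.
by rewrite (mulrA (P * E)) [P * E]mulrC [E * P * K]mulrAC.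
Qed.

Lemma plen0_head mu : plen mu = 0%N -> nth 0%N mu 0 = 0%N.
Proof. by case: mu => [|[|a] t]. Qed.

Lemma plen0_behead mu : plen mu = 0%N -> plen (behead mu) = 0%N.
Proof.
case: mu => [//|a t]; rewrite /plen /= => /eqP; rewrite addn_eq0 => /andP [_ /eqP] //.
Qed.

Theorem lemma2p2 (R : comRingType) (m n : nat) (lam : seq nat)
    (Hlam : is_partition lam)
    (Hexp : (n <= nth 0 lam 0 + m)%N)
    (x : 'I_m.+1 -> R) (y : 'I_n -> R) :
  antisym (fun x' y' =>
             SP [seq x' i | i <- enum 'I_m.+1] [seq y' j | j <- enum 'I_n] lam
             * xrho x' * xrho y') x y
  =
  antisym (fun x' y' =>
             (\prod_(j < n) (x' ord0 - y' j)) * x' ord0 ^+ (nth 0 lam 0 + m - n)%N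
             * SP [seq x' (lift ord0 i) | i <- enum 'I_m]
                  [seq y' j | j <- enum 'I_n] (behead lam)
             * xrho (fun i : 'I_m => x' (lift ord0 i)) * xrho y') x y.
Proof.
set xs := [seq x i | i <- enum 'I_m.+1].
set ys := [seq y j | j <- enum 'I_n].
set Vx := \sum_(s : 'S_m.+1) (-1) ^+ s * xrho (x \o s).
set Vy := \sum_(t : 'S_n) (-1) ^+ t * xrho (y \o t).
set e := (nth 0 lam 0 + m - n)%N.
set T := fun s : 'S_m.+1 => \prod_(j < n) (x (s ord0) - y j) * x (s ord0) ^+ e
           * SP [seq x (s (lift ord0 i)) | i <- enum 'I_m] ys (behead lam)
           * xrho (fun i : 'I_m => x (s (lift ord0 i))).
have -> : antisym (fun x' y' =>
             SP [seq x' i | i <- enum 'I_m.+1] [seq y' j | j <- enum 'I_n] lam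
             * xrho x' * xrho y') x y = SP xs ys lam * Vx * Vy.
  rewrite /antisym.
  transitivity (\sum_(s : 'S_m.+1) \sum_(t : 'S_n)
      SP xs ys lam * ((-1) ^+ s * xrho (x \o s)) * ((-1) ^+ t * xrho (y \o t))).
    apply: eq_bigr => s _; apply: eq_bigr => t _.
    by rewrite (SP_perm _ _ _ _ _ _ (perm_map_enum _ _ x s) (perm_map_enum _ _ y t)) sh1.
  exact: sum_fact.
have -> : antisym (fun x' y' =>
             (\prod_(j < n) (x' ord0 - y' j)) * x' ord0 ^+ e
             * SP [seq x' (lift ord0 i) | i <- enum 'I_m]
                  [seq y' j | j <- enum 'I_n] (behead lam)
             * xrho (fun i : 'I_m => x' (lift ord0 i)) * xrho y') x y
     = (\sum_(s : 'S_m.+1) (-1) ^+ s * T s) * Vy.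
  rewrite /antisym /Vy -sum_fact2; apply: eq_bigr => s _; apply: eq_bigr => t _.
  rewrite (SP_perm _ _ _ _ ys _ (perm_refl _) (perm_map_enum _ _ y t)).
  have -> : \prod_(j < n) ((x \o s) ord0 - (y \o t) j) = \prod_(j < n) (x (s ord0) - y j).
    by symmetry; apply: (reindex_inj (@perm_inj _ t)).
  by rewrite sh2.
congr (_ * _).
have Hsz : size ys = n by rewrite size_map size_enum_ord.
have HP : forall w : R, \prod_(yj <- ys) (w - yj) = \prod_(j < n) (w - y j).
  by move=> w; rewrite big_map big_enum.
rewrite /Vx (antisym_V R m x).
have [Hz | [a [t [El Ha]]]] : plen lam = 0%N \/ exists a t, lam = a :: t /\ a != 0%N.
    case: (lam) Hlam => [|a t] Hl; first by left.
    case: (eqVneq a 0%N) => Ha; last by right; exists a, t.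
    by left; subst a; rewrite /plen /= -/(plen t) plen_zero.
  rewrite (SP_nil _ _ _ _ Hz) mul1r.
  have He : e = (m - n)%N by rewrite /e plen0_head.
  have Hnm : (n <= m)%N by move: Hexp; rewrite plen0_head.
  transitivity (\det (Amx R m x (fun z => z ^+ (m - size ys) * \prod_(yj <- ys) (z - yj)))).
    by rewrite (DK R m x ys m (fun z => z ^+ (m - size ys) * \prod_(yj <- ys) (z - yj))) ?Hsz // subnn hsuper0g mul1r.
  rewrite -antisym_col0; apply: eq_bigr => s _; congr (_ * _).
  rewrite /T (SP_nil _ _ _ _ (plen0_behead _ Hz)) mulr1 He HP Hsz.
  by rewrite [_ * x (s ord0) ^+ _]mulrC.
subst lam; rewrite /= in Hexp e T *.
have Hp : plen (a :: t) = (plen t).+1 by rewrite /plen /= Ha.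
have HJ : SP xs ys (a :: t) = \det (Jm R xs ys (a :: t) (plen t).+1) by rewrite /SP Hp.
set cof := fun k : 'I_(plen t).+1 => cofactor (Jm R xs ys (a :: t) (plen t).+1) ord0 k.
set fk := fun (k : nat) (z : R) => z ^+ (a + k + m - size ys) * \prod_(yj <- ys) (z - yj).
rewrite HJ (expand_det_row _ ord0) mulr_suml.
transitivity (\sum_(k < (plen t).+1) cof k * (hsuper xs ys (a + k) * \det (Amx R m x (fun z => z ^+ m)))).
  apply: eq_bigr => k _; rewrite mxE idxE hsuperZ_nat /= subn0.
  by rewrite mulrAC mulrC.
transitivity (\sum_(k < (plen t).+1) cof k * \det (Amx R m x (fk k))).
  apply: eq_bigr => k _; congr (_ * _); symmetry.
  rewrite (DK R m x ys (a + k + m) (fk k)) ?addnK //.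
    by rewrite Hsz (leq_trans Hexp) //= addnAC leq_addr.
  by rewrite leq_addl.
transitivity (\sum_(k < (plen t).+1) \sum_(s : 'S_m.+1)
    cof k * ((-1) ^+ s * (fk k (x (s ord0)) * xrho (fun i : 'I_m => x (s (lift ord0 i)))))).
  by apply: eq_bigr => k _; rewrite -antisym_col0 mulr_sumr.
rewrite exchange_big; apply: eq_bigr => s _.
rewrite /T (SP_expand R (x (s ord0)) [seq x (s (lift ord0 i)) | i <- enum 'I_m] ys a t (plen t) erefl).
rewrite (Jm_perm _ _ _ _ _ _ (cons_perm R m x s)).
rewrite mulr_sumr mulr_suml mulr_sumr; apply: eq_bigr => k _.
rewrite /fk /cof HP Hsz.
have -> : (a + k + m - n)%N = (e + k)%N.
  by rewrite /e addnBAC // addnAC.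
by rewrite exprD sh3.
Qed.
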